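(* Let $\operatorname{Hank}_n(\mathbb{C})$ be the space of $n\times n$ complex Hankel matrices. Let $\mu_h\in\operatorname{Hank}_n(\mathbb{C})^*\otimes(\mathbb{C}^n)^*\otimes\mathbb{C}^n$ be the structure tensor of the Hankel matrix-vector product $(H,v)\mapsto Hv$. Then $\operatorname{rank}(\mu_h)=\underline{\operatorname{rank}}(\mu_h)=2n-1$. Moreover, let $\mu_H\in\operatorname{Hank}_n(\mathbb{C})^*\otimes\operatorname{Hank}_n(\mathbb{C})^*\otimes\mathbb{C}^{n\times n}$ be the structure tensor of the Hankel matrix-Hankel matrix product $(H,K)\mapsto HK$. Then $\operatorname{rank}(\mu_H)\le n(2n-1)$.
   Context: A Hankel matrix is a square matrix whose $(i,j)$ entry depends only on $i+j$. Structure tensor of a bilinear map $\beta:U\times V\to W$: the unique $\mu_\beta\in U^*\otimes V^*\otimes W$ with $\beta(u,v)=\mu_\beta(u,v,\cdot)$. Rank: least number of decomposable tensors summing to the tensor; border rank: least $r$ such that it is a limit of tensors of rank at most $r$. *)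

(* Defs.v *)
From Stdlib Require Import Reals Arith.

Definition C : Type := (R * R)%type.
Definition C0 : C := (0%R, 0%R).
Definition C1 : C := (1%R, 0%R).
Definition Cadd (x y : C) : C := (fst x + fst y, snd x + snd y)%R.
Definition Copp (x : C) : C := (- fst x, - snd x)%R.
Definition Cmul (x y : C) : C :=
  (fst x * fst y - snd x * snd y, fst x * snd y + snd x * fst y)%R.
Definition Cmod (x : C) : R := sqrt (fst x * fst x + snd x * snd x)%R.

Fixpoint Csum (r : nat) (f : nat -> C) : C :=
  match r with
  | O => C0
  | S r' => Cadd (Csum r' f) (f r')
  end.

(** A tensor in dual(U) (x) dual(V) (x) W, with dim U = da, dim V = db, dim W = dc,
    is given by its coordinate array [T a b c] (a < da, b < db, c < dc)
    with respect to fixed bases (dual bases on dual(U), dual(V)). *)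
Definition tensor := nat -> nat -> nat -> C.

Definition rank_le (da db dc : nat) (T : tensor) (r : nat) : Prop :=
  exists (x y z : nat -> nat -> C),
    forall a b c, (a < da)%nat -> (b < db)%nat -> (c < dc)%nat ->
      T a b c = Csum r (fun l => Cmul (Cmul (x l a) (y l b)) (z l c)).

Definition is_rank (da db dc : nat) (T : tensor) (r : nat) : Prop :=
  rank_le da db dc T r /\ (forall s, rank_le da db dc T s -> (r <= s)%nat).

Definition tensor_cv (da db dc : nat) (Tm : nat -> tensor) (T : tensor) : Prop :=
  forall a b c, (a < da)%nat -> (b < db)%nat -> (c < dc)%nat ->
    forall eps : R, (eps > 0)%R -> exists N : nat, forall m : nat, (m >= N)%nat ->
      (Cmod (Cadd (Tm m a b c) (Copp (T a b c))) < eps)%R.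

Definition border_rank_le (da db dc : nat) (T : tensor) (r : nat) : Prop :=
  exists Tm : nat -> tensor,
    (forall m, rank_le da db dc (Tm m) r) /\ tensor_cv da db dc Tm T.

Definition is_border_rank (da db dc : nat) (T : tensor) (r : nat) : Prop :=
  border_rank_le da db dc T r /\
  (forall s, border_rank_le da db dc T s -> (r <= s)%nat).

Definition std_basis (a : nat) : nat -> C :=
  fun k => if Nat.eqb k a then C1 else C0.

Definition structure_tensor (beta : (nat -> C) -> (nat -> C) -> (nat -> C)) : tensor :=
  fun a b c => beta (std_basis a) (std_basis b) c.

(** * Hankel matrices.
    Hank_n(C) is identified with C^(2n-1) via h |-> (h_(i+j))_(i,j<n);
    this is a linear isomorphism onto the space of n x n Hankel matrices. *)
Definition hankel (h : nat -> C) : nat -> nat -> C := fun i j => h (i + j)%nat.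

Definition hankel_vec_prod (n : nat) (h v : nat -> C) : nat -> C :=
  fun i => Csum n (fun j => Cmul (hankel h i j) (v j)).

(** Hankel matrix-matrix product (H, K) |-> HK, valued in C^(n x n),
    flattened row-major: entry (i,j) has index i*n + j. *)
Definition hankel_mat_prod (n : nat) (h k : nat -> C) : nat -> C :=
  fun c => Csum n (fun l => Cmul (hankel h (Nat.div c n) l) (hankel k l (Nat.modulo c n))).

Definition mu_h (n : nat) : tensor := structure_tensor (hankel_vec_prod n).
Definition mu_H (n : nat) : tensor := structure_tensor (hankel_mat_prod n).

(* Main.v *)
Require Import Defs.
From Stdlib Require Import Reals Arith.

From HB Require structures.
From mathcomp Require all_boot all_order all_algebra.
From mathcomp Require Rstruct complex zify ring lra.
Module Aux.
Import structures.
Import all_boot all_order all_algebra.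
Import Rstruct complex zify ring lra.
Import Order.TTheory GRing.Theory Num.Theory.
Local Open Scope ring_scope.

Definition toc (x : Defs.C) : R[i] := Complex x.1 x.2.
Definition ofc (z : R[i]) : Defs.C := (complex.Re z, complex.Im z).

Lemma tocK z : toc (ofc z) = z. Proof. by case: z. Qed.
Lemma toc_inj x y : toc x = toc y -> x = y.
Proof. by case: x y => [a b] [c d] [-> ->]. Qed.
Lemma toc_add x y : toc (Cadd x y) = toc x + toc y.
Proof. by case: x y => [a b] [c d]. Qed.
Lemma toc_mul x y : toc (Cmul x y) = toc x * toc y.
Proof. by case: x y => [a b] [c d]. Qed.
Lemma toc_opp x : toc (Copp x) = - toc x.
Proof. by case: x. Qed.
Lemma toc0 : toc Defs.C0 = 0. Proof. by []. Qed.
Lemma toc1 : toc Defs.C1 = 1. Proof. by []. Qed.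
Lemma toc_sum r f : toc (Csum r f) = \sum_(l < r) toc (f l).
Proof. elim: r => [|r IH]; first by rewrite big_ord0. by rewrite big_ord_recr /= toc_add IH. Qed.
Lemma Cmod_toc x : Cmod x = ComplexField.Normc.normc (toc x).
Proof. case: x => a b; by rewrite /Cmod RsqrtE /= !expr2. Qed.
Lemma vand N : exists (w : nat -> nat -> R[i]) (t : nat -> R[i]),
  forall a k, (a < N.+1)%N -> (k < N.+1)%N ->
    \sum_(l < N.+1) w l a * t l ^+ k = (k == a)%:R.
Proof.
pose t : nat -> R[i] := fun l => l%:R.
pose V : 'M[R[i]]_N.+1 := Vandermonde N.+1 (\row_(l < N.+1) t l).
have hV : V \in unitmx.
  rewrite unitmxE det_Vandermonde unitfE; apply/prodf_neq0 => i _.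
  apply/prodf_neq0 => j ij; rewrite !mxE subr_eq0 /t eqr_nat.
  by rewrite eq_sym ltn_eqF.
pose W := invmx V.
exists (fun l a => W (inord l) (inord a)), t => a k ha hk.
have := mulmxV hV; move/matrixP => /(_ (inord k) (inord a)).
rewrite !mxE -val_eqE /= !inordK // => <-.
by apply: eq_bigr => l _; rewrite !mxE inord_val inordK // mulrC.
Qed.
Lemma toc_std a k : toc (std_basis a k) = (k == a)%:R.
Proof. rewrite /std_basis; case: (Nat.eqb_spec k a) => [->|/eqP/negbTE ->]; by rewrite ?eqxx. Qed.

Lemma mu_h_val n a b c : (b < n)%N -> toc (mu_h n a b c) = (c + b == a)%N%:R.
Proof.
move=> hb; rewrite /mu_h /structure_tensor /hankel_vec_prod /hankel toc_sum.
rewrite (bigD1 (Ordinal hb)) //= big1 ?addr0.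
  by rewrite toc_mul !toc_std eqxx mulr1.
move=> j /eqP hj; rewrite toc_mul !toc_std.
have -> : (nat_of_ord j == b) = false by apply/negbTE/eqP => e; apply: hj; apply: val_inj.
by rewrite mulr0.
Qed.

Lemma mu_h_rank_le n : (1 <= n)%coq_nat -> rank_le (2*n-1) n n (mu_h n) (2*n-1).
Proof.
move=> hn.
have e : (2*n-1 = (2*n-2).+1)%N by lia.
rewrite e; have [w [t H]] := vand (2*n-2).
exists (fun l a => ofc (w l a)), (fun l b => ofc (t l ^+ b)), (fun l c => ofc (t l ^+ c)).
move=> a b c ha hb hc; apply: toc_inj.
have hb' : (b < n)%N by apply/ssrnat.ltP.
have ha' : (a < (2*n-2).+1)%N by apply/ssrnat.ltP.
have hk' : (c + b < (2*n-2).+1)%N by apply/ssrnat.ltP; lia.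
rewrite toc_sum mu_h_val // -H //.
by apply: eq_bigr => l _; rewrite !toc_mul !tocK -mulrA -exprD addnC.
Qed.
Lemma divE c n : (0 < n)%N -> (c %/ n)%N = Nat.div c n /\ (c %% n)%N = Nat.modulo c n.
Proof.
move=> h.
have hr : (Nat.modulo c n < n)%N by apply/ssrnat.ltP; apply: Nat.mod_upper_bound; lia.
have E := Nat.div_mod_eq c n.
move: hr E; move: (Nat.div c n) (Nat.modulo c n) => q r hr E.
rewrite E -/(muln n q) -/(addn _ r) mulnC.
by rewrite divnMDl // divn_small // addn0 modnMDl modn_small.
Qed.

Lemma sum_split (F : nat -> R[i]) N n :
  \sum_(q < n * N) F q = \sum_(i < n) \sum_(p < N) F (i * N + p)%N.
Proof.
elim: n => [|n IH]; first by rewrite mul0n !big_ord0.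
rewrite mulSnr big_split_ord big_ord_recr /= IH; congr (_ + _).
Qed.

Lemma mu_H_val n a b c : toc (mu_H n a b c) =
  \sum_(l < n) ((Nat.div c n + l == a)%N%:R * (l + Nat.modulo c n == b)%N%:R).
Proof.
rewrite /mu_H /structure_tensor /hankel_mat_prod /hankel toc_sum.
by apply: eq_bigr => l _; rewrite toc_mul !toc_std.
Qed.

Lemma mu_H_rank_le n : (1 <= n)%coq_nat ->
  rank_le (2*n-1) (2*n-1) (n*n) (mu_H n) (n*(2*n-1)).
Proof.
move=> hn.
have n0 : (0 < n)%N by apply/ssrnat.ltP; lia.
have e : (2*n-1 = (2*n-2).+1)%N by lia.
rewrite e; have [w [t H]] := vand (2*n-2).
set N := (2*n-2).+1 in H *.
pose X q a : R[i] := if ((q %/ N <= a) && (a < q %/ N + n))%N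
   then t (q %% N)%N ^+ (a - q %/ N)%N else 0.
pose Z q c : R[i] := if (Nat.div c n == q %/ N)%N
   then t (q %% N)%N ^+ (Nat.modulo c n) else 0.
exists (fun q a => ofc (X q a)), (fun q b => ofc (w (q %% N)%N b)),
  (fun q c => ofc (Z q c)).
move=> a b c ha hb hc; apply: toc_inj.
have [ha' hb' hc'] : [/\ (a < N)%N, (b < N)%N & (c < n * n)%N].
  by split; apply/ssrnat.ltP; rewrite /N; lia.
rewrite mu_H_val toc_sum.
under [in RHS]eq_bigr => q _ do rewrite /= !toc_mul !tocK.
rewrite (sum_split (fun q => X q a * w (q %% N)%N b * Z q c)).
have [E1 E2] := @divE c n n0.
rewrite -E1 -E2.
have hi0 : (c %/ n < n)%N by rewrite ltn_divLR.
have hj0 : (c %% n < n)%N by rewrite ltn_pmod.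
have dv : forall (i : nat) (p : 'I_N), ((i*N+p) %/ N = i)%N /\ ((i*N+p) %% N = p)%N.
  by move=> i p; rewrite divnMDl // modnMDl divn_small // modn_small // addn0.
rewrite [in RHS](bigD1 (Ordinal hi0)) //= [X in _ + X]big1 ?addr0; last first.
  move=> i /eqP hi; apply: big1 => p _.
  rewrite /Z -E1 -E2; have [-> ->] := dv i p.
  have -> : (c %/ n == i)%N = false.
    by apply/negbTE/eqP => ei; apply: hi; apply: val_inj.
  by rewrite mulr0.
rewrite /X /Z -E1 -E2.
under [in RHS]eq_bigr => p _ do rewrite (proj1 (dv (c %/ n)%N p)) (proj2 (dv (c %/ n)%N p)) eqxx.
have [hcond|hcond] := boolP ((c %/ n <= a < c %/ n + n)%N).
  have hk : (a - c %/ n + c %% n < N)%N by rewrite /N; lia.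
  have hl : (a - c %/ n < n)%N by lia.
  under [in RHS]eq_bigr => p _ do rewrite mulrAC -exprD mulrC.
  rewrite H // (bigD1 (Ordinal hl)) //= big1 ?addr0.
    by rewrite subnKC ?eqxx ?mul1r //; lia.
  move=> l /eqP hl'.
  have -> : (c %/ n + l == a)%N = false.
    apply/negbTE/eqP => el; apply: hl'; apply: val_inj => /=; lia.
  by rewrite mul0r.
under [in RHS]eq_bigr => p _ do rewrite !mul0r.
rewrite big1_eq big1 // => l _.
have -> : (c %/ n + l == a)%N = false.
  apply/negbTE/eqP => el; move: hcond (ltn_ord l); rewrite -el; lia.
by rewrite mul0r.
Qed.

Notation nc := (@ComplexField.Normc.normc R).

Lemma nc_ge0 (x : R[i]) : 0 <= nc x.
Proof. by case: x => a b; rewrite /ComplexField.Normc.normc sqrtr_ge0. Qed.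

Lemma nc_sum m (F : 'I_m -> R[i]) : nc (\sum_(k < m) F k) <= \sum_(k < m) nc (F k).
Proof.
elim/big_ind2: _ => //.
  by rewrite ComplexField.Normc.normc0.
move=> x1 x2 y1 y2 h1 h2; apply: Order.le_trans (le_normcD _ _) _; exact: lerD h1 h2.
Qed.

Lemma near_id N (A : 'M[R[i]]_(N.+1)) (u : 'rV[R[i]]_N.+1) :
  (forall a k, nc (A a k - (a == k)%:R) <= (2 * N.+1%:R)^-1) ->
  A *m u^T = 0 -> u = 0.
Proof.
move=> hA hAu.
case: (@arg_maxP _ R _ ord0 xpredT (fun k => nc (u 0 k)) isT) => i _ Hmax.
have E : \sum_k A i k * u 0 k = 0.
  move/matrixP: hAu => /(_ i 0); rewrite !mxE => h.
  by apply: etrans h; apply: eq_bigr => k _; rewrite mxE.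
have E2 : u 0 i = - \sum_k (A i k - (i == k)%:R) * u 0 k.
  under eq_bigr do rewrite mulrBl.
  rewrite sumrB E sub0r opprK (bigD1 i) //= big1 ?addr0 ?eqxx ?mul1r //.
  by move=> k /negbTE; rewrite eq_sym => ->; rewrite mul0r.
set x := nc (u 0 i).
have hx : x <= x / 2.
  rewrite {1}/x E2 normcN.
  have hs := nc_sum _ (fun k => (A i k - (i == k)%:R) * u 0 k).
  have h1 : \sum_(k < N.+1) nc ((A i k - (i == k)%:R) * u 0 k) <=
            \sum_(k < N.+1) (2 * N.+1%:R)^-1 * x.
    apply: ler_sum => k _; rewrite ComplexField.Normc.normcM.
    apply: ler_pM; [exact: nc_ge0|exact: nc_ge0|exact: hA|exact: Hmax].
  have h2 : \sum_(k < N.+1) (2 * N.+1%:R)^-1 * x <= x / 2.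
    rewrite sumr_const card_ord -[_ *+ N.+1]mulr_natl.
    have hN : (N.+1%:R : R) != 0 by rewrite pnatr_eq0.
    suff -> : N.+1%:R * ((2 * N.+1%:R)^-1 * x) = x / 2 by [].
    by rewrite invfM [2^-1 * _]mulrC -!mulrA mulrA divff // mul1r mulrC.
  exact: Order.le_trans hs (Order.le_trans h1 h2).
have x0 : x = 0 by apply/eqP; rewrite eq_le nc_ge0 andbT; lra.
apply/matrixP => r k; rewrite !mxE (ord1 r).
apply: ComplexField.Normc.eq0_normc; apply/eqP; rewrite eq_le nc_ge0 andbT -x0.
exact: Hmax.
Qed.

Lemma unif1 q (Q : nat -> nat -> Prop) :
  (forall k, (k < q)%N -> exists M, forall m, (M <= m)%N -> Q k m) ->
  exists M, forall m, (M <= m)%N -> forall k, (k < q)%N -> Q k m.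
Proof.
elim: q => [|q IH] h; first by exists 0%N.
have [M1 h1] := IH (fun k hk => h k (ltnW hk)).
have [M2 h2] := h q (ltnSn q).
exists (maxn M1 M2) => m hm k; rewrite ltnS leq_eqVlt => /orP[/eqP ->|hk].
  by apply: h2; apply: leq_trans hm; exact: leq_maxr.
by apply: h1 => //; apply: leq_trans hm; exact: leq_maxl.
Qed.

Lemma rank_border da db dc T r : rank_le da db dc T r -> border_rank_le da db dc T r.
Proof.
move=> h; exists (fun _ => T); split => // a b c _ _ _ eps heps; exists 0%N => m _.
by rewrite Cmod_toc toc_add toc_opp subrr ComplexField.Normc.normc0.
Qed.

Lemma border_lb n s : (1 <= n)%coq_nat ->
  border_rank_le (2*n-1) n n (mu_h n) s -> (2*n-1 <= s)%coq_nat.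
Proof.
move=> hn [Tm [Hr Hcv]].
have e : (2*n-1 = (2*n-2).+1)%N by lia.
rewrite e in Hr Hcv *.
set N' := (2*n-2)%N in Hr Hcv *.
apply/ssrnat.leP; rewrite leqNgt; apply/negP => hs.
pose bk k := minn k (n-1).
pose ck k := (k - bk k)%N.
have hbk k : (k < N'.+1)%N -> [/\ (bk k < n)%N, (ck k < n)%N & (ck k + bk k = k)%N].
  move=> hk; have hk' : (k <= 2*n-2)%N := hk; rewrite /ck /bk; split; lia.
pose eps : R := (2 * N'.+1%:R)^-1.
have heps : (0 < eps)%R by rewrite /eps invr_gt0 mulr_gt0 // ltr0n.
have [M HM] : exists M, forall m, (M <= m)%N -> forall a, (a < N'.+1)%N ->
    forall k, (k < N'.+1)%N ->
    Rlt (Cmod (Cadd (Tm m a (bk k) (ck k)) (Copp (mu_h n a (bk k) (ck k))))) eps.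
  apply: unif1 => a ha; apply: unif1 => k hk.
  have [h1 h2 _] := hbk k hk.
  have [||||M0 HM0] := Hcv a (bk k) (ck k) _ _ _ eps; try by apply/ssrnat.ltP.
    by apply/RltP.
  by exists M0 => m hm; apply: HM0; apply/ssrnat.leP.
have [x [y [z Hxyz]]] := Hr M.
pose X : 'M[R[i]]_(N'.+1, s) := \matrix_(a, l) toc (x l a).
pose Y : 'M[R[i]]_(s, N'.+1) := \matrix_(l, k) (toc (y l (bk k)) * toc (z l (ck k))).
pose K := kermx Y^T.
have hK : K != 0.
  rewrite /K kermx_eq0 /row_free; apply: contraL hs => /eqP <-.
  by rewrite -leqNgt rank_leq_col.
have [r hr] : exists r, row r K != 0.
  case: (pickP (fun r => row r K != 0)) => [r hr|h]; first by exists r.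
  case/negP: hK; apply/eqP/row_matrixP => r; rewrite row0.
  by apply/eqP; move: (h r) => /= /negbFE.
pose u := row r K.
have hu : u *m Y^T = 0 by rewrite /u -row_mul mulmx_ker row0.
have hYu : Y *m u^T = 0 by rewrite -[Y]trmxK -trmx_mul hu trmx0.
have hAu : (X *m Y) *m u^T = 0 by rewrite -mulmxA hYu mulmx0.
apply: (negP hr); apply/eqP; apply: (@near_id N' (X *m Y) u _ hAu) => a k.
have [h1 h2 h3] := hbk k (ltn_ord k).
have hm : toc (mu_h n a (bk k) (ck k)) = (a == k)%:R.
  by rewrite mu_h_val // h3 eq_sym.
have hT : toc (Tm M a (bk k) (ck k)) = (X *m Y) a k.
  rewrite Hxyz; try by apply/ssrnat.ltP.
  rewrite toc_sum !mxE; apply: eq_bigr => l _.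
  by rewrite !mxE !toc_mul mulrA.
have := HM M (leqnn M) a (ltn_ord a) k (ltn_ord k).
rewrite Cmod_toc toc_add toc_opp hm hT => /RltP /ltW.
done.
Qed.
End Aux.

Theorem mainTheorem11 (n : nat) (hn : (1 <= n)%nat) :
  is_rank (2 * n - 1) n n (mu_h n) (2 * n - 1) /\
  is_border_rank (2 * n - 1) n n (mu_h n) (2 * n - 1) /\
  rank_le (2 * n - 1) (2 * n - 1) (n * n) (mu_H n) (n * (2 * n - 1)).
Proof.
  split; [split|split; [split|]].
  - exact (Aux.mu_h_rank_le n hn).
  - intros s Hs. apply (Aux.border_lb n s hn). apply Aux.rank_border. exact Hs.
  - apply Aux.rank_border. exact (Aux.mu_h_rank_le n hn).
  - intros s Hs. exact (Aux.border_lb n s hn Hs).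
  - exact (Aux.mu_H_rank_le n hn).
Qed.
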